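(* Let $(\mathcal S,\mathcal A,H,P,R,\mu)$ be an episodic tabular MDP as in the context, with non-negative mean rewards $r$, and let $C\ge1$. Assume that for every $(h,s)\in[H]\times\mathcal S$ such that $r_h(s,a)>0$ for some $a$, we have $\min_{a}r_h(s,a)>0$ and $\max_a r_h(s,a)/\min_a r_h(s,a)\le C$. Then $CR^1(P,r)\ge\frac{1}{AC}$.
   Context: Episodic tabular MDP $(\mathcal S,\mathcal A,H,P,R,\mu)$: finite state space $\mathcal S$ with $|\mathcal S|=S$, finite action space $\mathcal A$ with $|\mathcal A|=A$, horizon $H\in\mathbb N$, transition kernels $P_h(\cdot\mid s,a)$, initial state distribution $\mu$, and random non-negative rewards $R_h(s,a)$ for $(h,s,a)\in\mathcal X:=[H]\times\mathcal S\times\mathcal A$. Initially $s_1\sim\mu$; at step $h$ the agent in state $s_h$ picks $a_h$, receives $R_h(s_h,a_h)$ and moves to $s_{h+1}\sim P_h(\cdot\mid s_h,a_h)$. All rewards are drawn before the interaction. The vectors $\mathcal R_h=\{R_h(s,a)\}_{s,a}$ for different $h$ are mutually independent (entries of one $\mathcal R_h$ may be arbitrarily correlated); rewards are independent of transitions, and transitions are independent across steps. Let $r_h(s,a)=\mathbb E[R_h(s,a)]$ and let $\mathcal D(r)$ denote the set of all such reward distributions with means $r$. For $L\in\{0,\dots,H\}$ an $L$-lookahead policy draws $a_h\sim\pi_h(\cdot\mid s_h,\mathcal R_h^L)$, where $\mathcal R_h^L=(\mathcal R_t)_{h\le t\le\min(h+L-1,H)}$ and $\mathcal R_h^0=\emptyset$;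 $\Pi^L$ is the set of these policies. The value is $V^{L,\pi}(P,r)=\mathbb E[\sum_{h=1}^H R_h(s_h,a_h)]$, and $V^{L,*}(P,r)=\sup_{\pi\in\Pi^L}V^{L,\pi}(P,r)$. The competitive ratio is $CR^L(P,r)=\inf_{\mathcal D(r)}V^{0,*}(P,r)/V^{L,*}(P,r)$, with the convention that any division by zero equals $+\infty$. In particular $CR^1$ compares no-lookahead agents to agents that observe the current step's rewards $\mathcal R_h$ before acting. *)

(* Defs.v *)
From HB Require Import structures.
From mathcomp Require Import all_boot all_order all_algebra.
From mathcomp Require Import all_classical all_reals all_analysis.
Set Implicit Arguments. Unset Strict Implicit. Unset Printing Implicit Defensive.
Import Order.TTheory GRing.Theory Num.Theory.
Local Open Scope classical_set_scope.
Local Open Scope ring_scope.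

Section MDP.
Variables (R : realType) (S A : finType) (H : nat).

(* Steps are indexed 0, ..., H-1 (the paper's 1, ..., H). *)

(* Transition kernels P h s a s' = P_h(s' | s, a) and initial distribution mu. *)
Definition valid_mdp (P : nat -> S -> A -> S -> R) (mu : S -> R) : Prop :=
  [/\ (forall s, 0 <= mu s), \sum_(s : S) mu s = 1,
      (forall h s a s', (h < H)%N -> 0 <= P h s a s') &
      (forall h s a, (h < H)%N -> \sum_(s' : S) P h s a s' = 1)].

(* A reward distribution in D(r), realized on a probability space (T, Pr):
   X h w is the reward vector R_h = {R_h(s,a)}_{s,a} at step h.  Entries of
   one R_h may be arbitrarily correlated.  The steps are mutually
   independent and independent from the transitions: this is encoded in the
   value below, which only uses the law of each R_h separately (i.e. the
   value is computed under the independent coupling of the R_h). *)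
Definition reward_dist (dT : measure_display) (T : measurableType dT)
  (Pr : probability T R) (r : nat -> S -> A -> R)
  (X : nat -> T -> S -> A -> R) : Prop :=
  forall h s a, (h < H)%N ->
    [/\ measurable_fun setT (fun w => X h w s a),
        (forall w, 0 <= X h w s a) &
        (\int[Pr]_w (X h w s a)%:E = (r h s a)%:E)%E].

(* A (possibly randomized, Markov) lookahead policy:
   pi h s rho a = probability of choosing a at step h in state s when the
   observed current reward vector is rho (1-lookahead). *)
Definition policy := nat -> S -> (S -> A -> R) -> A -> R.

Definition valid_policy (dT : measure_display) (T : measurableType dT)
  (X : nat -> T -> S -> A -> R) (pi : policy) : Prop :=
  [/\ (forall h s rho a, 0 <= pi h s rho a),
      (forall h s rho, \sum_(a : A) pi h s rho a = 1) &
      (forall h s a, measurable_fun setT (fun w => pi h s (X h w) a))].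

Definition no_lookahead (pi : policy) : Prop :=
  forall h s rho rho' a, pi h s rho a = pi h s rho' a.

Fixpoint occupancy (dT : measure_display) (T : measurableType dT)
  (Pr : probability T R) (P : nat -> S -> A -> S -> R) (mu : S -> R)
  (X : nat -> T -> S -> A -> R) (pi : policy) (h : nat) : S -> R :=
  match h with
  | 0 => mu
  | h'.+1 => fun s' =>
      \sum_(s : S) occupancy Pr P mu X pi h' s *
        fine (\int[Pr]_w (\sum_(a : A) pi h' s (X h' w) a * P h' s a s')%:E)%E
  end.

(* Value V^{pi} = E[ sum_h R_h(s_h, a_h) ]; since R_h is independent of s_h,
   E[R_h(s_h,a_h)] = sum_s Pr(s_h = s) E[ sum_a pi_h(a|s,R_h) R_h(s,a) ]. *)
Definition value (dT : measure_display) (T : measurableType dT)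
  (Pr : probability T R) (P : nat -> S -> A -> S -> R) (mu : S -> R)
  (X : nat -> T -> S -> A -> R) (pi : policy) : \bar R :=
  (\sum_(h < H) \sum_(s : S)
     (occupancy Pr P mu X pi h s)%:E *
     \int[Pr]_w (\sum_(a : A) pi h s (X h w) a * X h w s a)%:E)%E.

Definition Vstar0 (dT : measure_display) (T : measurableType dT)
  (Pr : probability T R) (P : nat -> S -> A -> S -> R) (mu : S -> R)
  (X : nat -> T -> S -> A -> R) : \bar R :=
  ereal_sup [set value Pr P mu X pi | pi in
              [set pi | valid_policy X pi /\ no_lookahead pi]].

Definition Vstar1 (dT : measure_display) (T : measurableType dT)
  (Pr : probability T R) (P : nat -> S -> A -> S -> R) (mu : S -> R)
  (X : nat -> T -> S -> A -> R) : \bar R :=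
  ereal_sup [set value Pr P mu X pi | pi in [set pi | valid_policy X pi]].

(* Division with the convention x / 0 = +oo (values are finite here). *)
Definition crdiv (x y : \bar R) : \bar R :=
  if y == 0%E then +oo%E else (x * ((fine y)^-1)%:E)%E.

Definition CR1 (P : nat -> S -> A -> S -> R) (mu : S -> R)
  (r : nat -> S -> A -> R) : \bar R :=
  ereal_inf [set v | exists (dT : measure_display) (T : measurableType dT)
                        (Pr : probability T R) (X : nat -> T -> S -> A -> R),
                        reward_dist Pr r X /\
                        v = crdiv (Vstar0 Pr P mu X) (Vstar1 Pr P mu X)].

End MDP.

(* Main.v *)
Require Import Defs.
From HB Require Import structures.
From mathcomp Require Import all_boot all_order all_algebra.
From mathcomp Require Import all_classical all_reals all_analysis.
From mathcomp Require Import measurable_realfun.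
From mathcomp Require Import ring lra.
Import Order.TTheory GRing.Theory Num.Theory.
Local Open Scope ring_scope.

Lemma term_le_sum (R : realType) (I : finType) (F : I -> R) (i : I) :
  (forall j, 0 <= F j) -> F i <= \sum_j F j.
Proof.
move=> F0; rewrite (bigD1 i) //= lerDl; exact: sumr_ge0.
Qed.

Section Aux.
Context (R : realType) (dT : measure_display) (T : measurableType dT)
  (Pr : probability T R) (A : finType).

Lemma int_cst (x : R) : (\int[Pr]_w (cst x%:E w) = x%:E)%E.
Proof.
rewrite integral_cst //.
have h := probability_setT Pr.
by apply: (@eq_trans _ _ (x%:E * 1)%E); [congr (_ * _)%E | rewrite mule1].
Qed.

Lemma lin_int (f : A -> T -> R) (c m : A -> R) :
 (forall a, measurable_fun setT (f a)) -> (forall a w, 0 <= f a w) ->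
 (forall a, 0 <= c a) ->
 (forall a, (\int[Pr]_w (f a w)%:E = (m a)%:E)%E) ->
 (\int[Pr]_w (\sum_a c a * f a w)%:E = (\sum_a c a * m a)%:E)%E.
Proof.
move=> mf f0 c0 fm.
under eq_integral do rewrite -sumEFin.
rewrite ge0_integral_sum //.
- rewrite -sumEFin; apply: eq_bigr => a _.
  under eq_integral do rewrite EFinM.
  rewrite ge0_integralZl //.
  + by rewrite fm EFinM.
  + exact/measurable_EFinP.
  + by move=> w _; rewrite lee_fin.
  + by rewrite lee_fin.
- move=> a; apply/measurable_EFinP; apply: measurable_funM => //.
- by move=> a w _; rewrite lee_fin mulr_ge0.
Qed.

Lemma int01 (g : T -> R) : measurable_fun setT g -> (forall w, 0 <= g w <= 1) ->
  (\int[Pr]_w (g w)%:E = (fine (\int[Pr]_w (g w)%:E))%:E)%E /\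
  0 <= fine (\int[Pr]_w (g w)%:E) <= 1.
Proof.
move=> mg g01.
have i0 : (0 <= \int[Pr]_w (g w)%:E)%E.
  by apply: integral_ge0 => w _; rewrite lee_fin; case/andP: (g01 w).
have i1 : (\int[Pr]_w (g w)%:E <= 1)%E.
  apply: (@le_trans _ _ (\int[Pr]_w (cst 1%E) w)%E).
  - apply: ge0_le_integral => //.
    + by move=> w _; rewrite lee_fin; case/andP: (g01 w).
    + exact/measurable_EFinP.
    + by move=> w _; rewrite lee_fin; case/andP: (g01 w).
  - by rewrite int_cst.
have fin : (\int[Pr]_w (g w)%:E)%E \is a fin_num.
  by rewrite ge0_fin_numE // (le_lt_trans i1) // ltry.
split; first by rewrite fineK.
by rewrite fine_ge0 //= -lee_fin fineK.
Qed.

End Aux.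

Section MDPproof.
Context (R : realType) (S A : finType) (H : nat)
  (P : nat -> S -> A -> S -> R) (mu : S -> R) (r : nat -> S -> A -> R)
  (dT : measure_display) (T : measurableType dT) (Pr : probability T R)
  (X : nat -> T -> S -> A -> R).
Context (hmdp : valid_mdp H P mu) (hrd : reward_dist H Pr r X).
Context (hr0 : forall h s a, (h < H)%N -> 0 <= r h s a).

Let P0 h s a s' : (h < H)%N -> 0 <= P h s a s'.
Proof. by case: hmdp => _ _ + _; apply. Qed.
Let P1 h s a s' : (h < H)%N -> P h s a s' <= 1.
Proof.
move=> hH; case: hmdp => _ _ _ /(_ h s a hH) <-.
by apply: term_le_sum => j; apply: P0.
Qed.

Definition mm (pi : policy R S A) h s a :=
  fine (\int[Pr]_w (pi h s (X h w) a)%:E)%E.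
Definition pi0 (pi : policy R S A) : policy R S A := fun h s _ a => mm pi h s a.

Lemma pi01 { pi : policy R S A } : valid_policy X pi -> forall h s rho a, 0 <= pi h s rho a <= 1.
Proof.
case=> p0 p1 _ h s rho a; rewrite p0 /= -(p1 h s rho).
exact: term_le_sum.
Qed.

Lemma mm_int { pi : policy R S A } : valid_policy X pi -> forall h s a,
  (\int[Pr]_w (pi h s (X h w) a)%:E = (mm pi h s a)%:E)%E /\ 0 <= mm pi h s a <= 1.
Proof.
move=> vp h s a; have [_ _ pm] := vp.
by apply: int01 => // w; apply: pi01.
Qed.

Lemma mm_sum { pi : policy R S A } : valid_policy X pi -> forall h s, \sum_a mm pi h s a = 1.
Proof.
move=> vp h s; have [p0 p1 pm] := vp.
have := @lin_int R dT T Pr A (fun a w => pi h s (X h w) a) (fun _ => 1) (mm pi h s)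
  (pm h s) (fun a w => p0 h s (X h w) a) (fun _ => ler01)
  (fun a => proj1 (mm_int vp h s a)).
move=> e.
have e2 : \sum_a 1 * mm pi h s a = \sum_a mm pi h s a.
  by apply: eq_bigr => a _; rewrite mul1r.
apply: EFin_inj; rewrite -e2 -e.
under eq_integral do rewrite (eq_bigr _ (fun a _ => mul1r _)) p1.
by rewrite -[(fun _ => _)]/(cst 1%:E) int_cst.
Qed.

Lemma pi0_valid { pi : policy R S A } : valid_policy X pi -> valid_policy X (pi0 pi) /\ no_lookahead (pi0 pi).
Proof.
move=> vp; split; [split|by []].
- by move=> h s rho a; case/andP: (proj2 (mm_int vp h s a)).
- by move=> h s rho; apply: mm_sum.
- by move=> h s a; apply: measurable_cst.
Qed.


Lemma occ_step { pi : policy R S A } : valid_policy X pi -> forall h s', (h < H)%N ->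
  occupancy Pr P mu X pi h.+1 s' =
  \sum_s occupancy Pr P mu X pi h s * \sum_a mm pi h s a * P h s a s'.
Proof.
move=> vp h s' hH /=; apply: eq_bigr => s _; congr (_ * _).
have [p0 p1 pm] := vp.
have -> : (fun w => (\sum_a pi h s (X h w) a * P h s a s')%:E) =
          (fun w => (\sum_a P h s a s' * pi h s (X h w) a)%:E).
  by apply/funext => w; congr (_%:E); apply: eq_bigr => a _; rewrite mulrC.
rewrite (@lin_int R dT T Pr A (fun a w => pi h s (X h w) a) (fun a => P h s a s') (mm pi h s)
  (pm h s) (fun a w => p0 h s (X h w) a) (fun a => P0 h s a s' hH)
  (fun a => proj1 (mm_int vp h s a))) /=.
by apply: eq_bigr => a _; rewrite mulrC.
Qed.

Lemma mm_pi0 pi h s a : mm (pi0 pi) h s a = mm pi h s a.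
Proof. by rewrite /mm /pi0 -[(fun _ => _)]/(cst (mm pi h s a)%:E) int_cst. Qed.

Lemma occ_eq { pi : policy R S A } : valid_policy X pi -> forall h, (h <= H)%N -> forall s,
  occupancy Pr P mu X (pi0 pi) h s = occupancy Pr P mu X pi h s.
Proof.
move=> vp; have [vp0 _] := pi0_valid vp.
elim=> [//|h IH] hH s'.
rewrite (occ_step vp0) // (occ_step vp) //.
apply: eq_bigr => s _; rewrite IH ?(ltnW hH) //; congr (_ * _).
by apply: eq_bigr => a _; rewrite mm_pi0.
Qed.

Lemma occ_ge0 { pi : policy R S A } : valid_policy X pi -> forall h, (h <= H)%N -> forall s,
  0 <= occupancy Pr P mu X pi h s.
Proof.
move=> vp; elim=> [_ s|h IH hH s'] /=; first by case: hmdp.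
rewrite -/(occupancy Pr P mu X pi h.+1 s') (occ_step vp) //.
apply: sumr_ge0 => s _; apply: mulr_ge0; first exact/IH/ltnW.
apply: sumr_ge0 => a _; apply: mulr_ge0; last exact: P0.
by case/andP: (proj2 (mm_int vp h s a)).
Qed.

Definition Kb : R := #|S|%:R * #|A|%:R.

Lemma occ_le { pi : policy R S A } : valid_policy X pi -> forall h, (h <= H)%N -> forall s,
  occupancy Pr P mu X pi h s <= Kb ^+ h.
Proof.
move=> vp; elim=> [_ s|h IH hH s'] /=.
  rewrite expr0; case: hmdp => m0 m1 _ _; rewrite -m1; exact: term_le_sum.
rewrite -/(occupancy Pr P mu X pi h.+1 s') (occ_step vp) //.
apply: (@le_trans _ _ (\sum_(s : S) Kb ^+ h * #|A|%:R)).
  apply: ler_sum => s _; apply: ler_pM.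
  - exact: occ_ge0 (ltnW hH) s.
  - apply: sumr_ge0 => a _; apply: mulr_ge0; last exact: P0.
    by case/andP: (proj2 (mm_int vp h s a)).
  - exact/IH/ltnW.
  - rewrite -sum1_card natr_sum; apply: ler_sum => a _.
    have /andP[m0 m1] := proj2 (mm_int vp h s a).
    by rewrite -[1]mulr1; apply: ler_pM => //; [exact: P0 | exact: P1].
have -> : \sum_(s : S) Kb ^+ h * #|A|%:R = Kb ^+ h * #|A|%:R * #|S|%:R.
  by rewrite sumr_const [RHS]mulr_natr.
rewrite /Kb exprSr le_eqVlt; apply/orP; left; apply/eqP; ring.
Qed.


Lemma rew_le { pi : policy R S A } : valid_policy X pi -> forall h s, (h < H)%N ->
  (\int[Pr]_w (\sum_a pi h s (X h w) a * X h w s a)%:E <= (\sum_a r h s a)%:E)%E.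
Proof.
move=> vp h s hH; have [p0 p1 pm] := vp.
apply: (@le_trans _ _ (\int[Pr]_w (\sum_a 1 * X h w s a)%:E)%E).
  apply: ge0_le_integral => //.
  - move=> w _; rewrite lee_fin; apply: sumr_ge0 => a _; apply: mulr_ge0 => //.
    by case: (hrd h s a hH).
  - apply/measurable_EFinP; apply: measurable_sum => a.
    apply: measurable_funM => //; by case: (hrd h s a hH).
  - apply/measurable_EFinP; apply: measurable_sum => a.
    apply: measurable_funM => //; by case: (hrd h s a hH).
  - move=> w _; rewrite lee_fin; apply: ler_sum => a _; apply: ler_wpM2r.
    + by case: (hrd h s a hH).
    + by case/andP: (pi01 vp h s (X h w) a).
rewrite (@lin_int R dT T Pr A (fun a w => X h w s a) (fun _ => 1) (fun a => r h s a)).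
- by rewrite lee_fin; under eq_bigr do rewrite mul1r.
- by move=> a; case: (hrd h s a hH).
- by move=> a w; case: (hrd h s a hH).
- by move=> a; apply: ler01.
- by move=> a; case: (hrd h s a hH).
Qed.

Lemma rew_pi0 { pi : policy R S A } : valid_policy X pi -> forall h s, (h < H)%N ->
  (\int[Pr]_w (\sum_a pi0 pi h s (X h w) a * X h w s a)%:E
   = (\sum_a mm pi h s a * r h s a)%:E)%E.
Proof.
move=> vp h s hH.
apply: (@lin_int R dT T Pr A (fun a w => X h w s a) (mm pi h s) (fun a => r h s a)).
- by move=> a; case: (hrd h s a hH).
- by move=> a w; case: (hrd h s a hH).
- by move=> a; case/andP: (proj2 (mm_int vp h s a)).
- by move=> a; case: (hrd h s a hH).
Qed.


Lemma ratio (m x : A -> R) (C : R) : (forall a, 0 <= m a) -> \sum_a m a = 1 ->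
  (forall a a', x a <= C * x a') ->
  \sum_a x a <= #|A|%:R * C * \sum_a m a * x a.
Proof.
move=> m0 m1 hx.
have -> : \sum_a x a = \sum_a' m a' * \sum_a x a by rewrite -mulr_suml m1 mul1r.
rewrite mulr_sumr; apply: ler_sum => a' _.
rewrite mulrA [_ * m a']mulrC -mulrA; apply: ler_wpM2l => //.
apply: (@le_trans _ _ (\sum_(a : A) C * x a')); first exact: ler_sum.
by rewrite sumr_const -[X in X <= _]mulr_natl mulrA.
Qed.

Lemma occ_ge0E { pi : policy R S A } : valid_policy X pi -> forall (h : 'I_H) s,
  (0 <= (occupancy Pr P mu X pi h s)%:E)%E.
Proof. by move=> vp h s; rewrite lee_fin; apply: occ_ge0 => //; apply: ltnW. Qed.

Lemma val_le { pi : policy R S A } : valid_policy X pi ->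
  (value H Pr P mu X pi <=
   (\sum_(h < H) \sum_s occupancy Pr P mu X pi h s * \sum_a r h s a)%:E)%E.
Proof.
move=> vp; rewrite /value -sumEFin; apply: lee_sum => h _.
rewrite -sumEFin; apply: lee_sum => s _; rewrite EFinM.
apply: lee_pmul => //; first exact: occ_ge0E.
- apply: integral_ge0 => w _; rewrite lee_fin; apply: sumr_ge0 => a _.
  apply: mulr_ge0; first by case/andP: (pi01 vp h s (X h w) a).
  by case: (hrd h s a (ltn_ord h)).
- exact: rew_le.
Qed.

Lemma val0_eq { pi : policy R S A } : valid_policy X pi ->
  value H Pr P mu X (pi0 pi) =
   (\sum_(h < H) \sum_s occupancy Pr P mu X pi h s * \sum_a mm pi h s a * r h s a)%:E.
Proof.
move=> vp; rewrite /value -sumEFin; apply: eq_bigr => h _.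
rewrite -sumEFin; apply: eq_bigr => s _; rewrite EFinM.
by rewrite occ_eq //; [rewrite rew_pi0 | apply: ltnW].
Qed.

Lemma val_ge0 { pi : policy R S A } : valid_policy X pi ->
  (0 <= value H Pr P mu X pi)%E.
Proof.
move=> vp; apply: sume_ge0 => h _; apply: sume_ge0 => s _.
apply: mule_ge0; first exact: occ_ge0E.
apply: integral_ge0 => w _; rewrite lee_fin; apply: sumr_ge0 => a _.
apply: mulr_ge0; first by case/andP: (pi01 vp h s (X h w) a).
by case: (hrd h s a (ltn_ord h)).
Qed.

Lemma val_cmp { pi : policy R S A } (C : R) : valid_policy X pi ->
  (forall h s a a', (h < H)%N -> r h s a <= C * r h s a') ->
  (value H Pr P mu X pi <= (#|A|%:R * C)%:E * value H Pr P mu X (pi0 pi))%E.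
Proof.
move=> vp hC; rewrite (val0_eq vp) -EFinM; apply: (le_trans (val_le vp)).
rewrite lee_fin mulr_sumr; apply: ler_sum => h _.
rewrite mulr_sumr; apply: ler_sum => s _.
rewrite mulrCA; apply: ler_wpM2l; first by apply: occ_ge0 => //; apply: ltnW.
apply: ratio; last by move=> a a'; apply: hC.
- by move=> a; case/andP: (proj2 (mm_int vp h s a)).
- exact: mm_sum.
Qed.

Lemma val_bd { pi : policy R S A } : valid_policy X pi ->
  (value H Pr P mu X pi <=
   (\sum_(h < H) \sum_(s : S) Kb ^+ h * \sum_a r h s a)%:E)%E.
Proof.
move=> vp; apply: (le_trans (val_le vp)); rewrite lee_fin.
apply: ler_sum => h _; apply: ler_sum => s _; apply: ler_wpM2r.
- by apply: sumr_ge0 => a _; apply: hr0.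
- by apply: occ_le => //; apply: ltnW.
Qed.


Lemma core (C : R) : (0 < #|A|)%N -> 1 <= C ->
  (forall h s a a', (h < H)%N -> r h s a <= C * r h s a') ->
  ((1 / (#|A|%:R * C))%:E <= crdiv (Vstar0 H Pr P mu X) (Vstar1 H Pr P mu X))%E.
Proof.
move=> A0 C1 hC.
set c := #|A|%:R * C.
have c0 : 0 < c by rewrite /c mulr_gt0 ?ltr0n // (lt_le_trans ltr01 C1).
have V1le : (Vstar1 H Pr P mu X <= c%:E * Vstar0 H Pr P mu X)%E.
  apply: ge_ereal_sup => _ [pi vp <-].
  apply: (le_trans (val_cmp _ vp hC)); apply: lee_wpmul2l; first by rewrite lee_fin ltW.
  apply: ereal_sup_ubound; exists (pi0 pi) => //; exact: pi0_valid vp.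
have V1bd : (Vstar1 H Pr P mu X <=
   (\sum_(h < H) \sum_(s : S) Kb ^+ h * \sum_a r h s a)%:E)%E.
  by apply: ge_ereal_sup => _ [pi vp <-]; apply: val_bd.
have V10 : (0 <= Vstar1 H Pr P mu X)%E.
  pose u : policy R S A := fun _ _ _ _ => #|A|%:R^-1.
  have vu : valid_policy X u.
    split.
    - by move=> h s rho a; rewrite /u invr_ge0 ler0n.
    - move=> h s rho; rewrite /u.
      have -> : \sum_(a : A) #|A|%:R^-1 = #|A|%:R^-1 * #|A|%:R :> R.
        by rewrite sumr_const [RHS]mulr_natr.
      rewrite mulVf //.
      by rewrite pnatr_eq0 -lt0n.
    - by move=> h s a; apply: measurable_cst.
  apply: le_ereal_sup_tmp; exists (value H Pr P mu X u); first by exists u.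
  exact: val_ge0.
rewrite /crdiv; case: eqP => [_|V1n0]; first exact: leey.
have fin : Vstar1 H Pr P mu X \is a fin_num.
  by rewrite ge0_fin_numE // (le_lt_trans V1bd) // ltry.
set v := fine (Vstar1 H Pr P mu X).
have V1E : Vstar1 H Pr P mu X = v%:E by rewrite fineK.
have v0 : 0 < v.
  rewrite lt_neqAle fine_ge0 // andbT; apply/eqP => v0; apply: V1n0.
  by rewrite V1E -v0.
move: V1le; rewrite V1E; case: (Vstar0 H Pr P mu X) => [x| |] hle.
- rewrite -EFinM lee_fin ler_pdivlMr // mul1r mulrC ler_pdivrMr // mulrC.
  by rewrite -lee_fin EFinM.
- by rewrite gt0_mulye ?leey // lte_fin invr_gt0.
- by move: hle; rewrite gt0_muleNy ?lte_fin // leeNy_eq.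
Qed.

End MDPproof.

Theorem mainTheorem9 (R : realType) (S A : finType) (H : nat)
  (P : nat -> S -> A -> S -> R) (mu : S -> R) (r : nat -> S -> A -> R)
  (C : R) :
  (0 < #|A|)%N ->
  valid_mdp H P mu ->
  (forall h s a, (h < H)%N -> 0 <= r h s a) ->
  1 <= C ->
  (forall h s, (h < H)%N -> (exists a, 0 < r h s a) ->
     (forall a, 0 < r h s a) /\ (forall a a', r h s a <= C * r h s a')) ->
  ((1 / (#|A|%:R * C))%:E <= CR1 H P mu r)%E.
Proof.
move=> A0 hmdp hr0 C1 hyp.
apply: le_ereal_inf_tmp => _ [dT [T [Pr [X [rd ->]]]]].
apply: (@core R S A H P mu r dT T Pr X hmdp rd hr0 C A0 C1) => h s a a' hH.
case: (pselect (exists a, 0 < r h s a)) => [ex|nex].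
  exact: (proj2 (hyp h s hH ex)).
have z b : r h s b = 0.
  apply/eqP; rewrite eq_le hr0 // andbT leNgt; apply/negP => pos.
  by apply: nex; exists b.
by rewrite !z mulr0.
Qed.
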